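(* Let $B$, $C$, $\phi$, $\psi$ and the skew brace $A=(B\times C,\cdot,\circ)$ be as in the construction below. Then $A$ is meta-trivial if and only if \[ \psi_{\phi_{c_1}(b_1)b_1^{-1}}\big(\psi_{b_2}(c_2)c_2^{-1}\big) = \psi_{b_2}(c_2)c_2^{-1} \] for all $b_1,b_2\in B$ and $c_1,c_2\in C$.
   Context: Construction: $B$, $C$ are groups with $C$ abelian; $\phi: C\to\mathrm{Aut}(B)$, $c\mapsto\phi_c$, and $\psi: B\to\mathrm{Aut}(C)$, $b\mapsto\psi_b$, are homomorphisms with $\phi_{\psi_b(c)}=\phi_c$ for all $b\in B,c\in C$. The set $A=B\times C$ carries the operations $(b_1,c_1)\cdot(b_2,c_2) = (b_1\phi_{c_1}(b_2), c_1c_2)$ and $(b_1,c_1)\circ(b_2,c_2) = (b_1b_2, c_1\psi_{b_1}(c_2))$, which make it a skew brace (a set with two group operations satisfying $a\circ(b\cdot c)=(a\circ b)\cdot a^{-1}\cdot(a\circ c)$, $a^{-1}$ the inverse in $(A,\cdot)$). Define $a*b = a^{-1}\cdot(a\circ b)\cdot b^{-1}$ and let $A'$ be the subgroup of $(A,\cdot)$ generated by all $a*b$, $a,b\in A$. $A$ is meta-trivial if $A'$ is a trivial skew brace, i.e. $x\circ y = x\cdot y$ for all $x,y\in A'$. *)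

(* Defs.v *)
(* groups are (possibly infinite) mathcomp `groupType`s
   from boot/monoid.v. *)
From HB Require Import structures.
From mathcomp Require Import ssreflect ssrfun ssrbool eqtype choice monoid.
Set Implicit Arguments.
Unset Strict Implicit.
Unset Printing Implicit Defensive.
Local Open Scope group_scope.

Definition is_group_aut (G : groupType) (f : G -> G) : Prop :=
  bijective f /\ {morph f : x y / x * y}.

Definition is_aut_action (H G : groupType) (act : H -> G -> G) : Prop :=
  (forall h, is_group_aut (act h)) /\
  (forall h1 h2 x, act (h1 * h2) x = act h1 (act h2 x)).

Definition is_abelian (G : groupType) : Prop := forall x y : G, x * y = y * x.

Section SkewBrace.
Variables (B C : groupType) (phi : C -> B -> B) (psi : B -> C -> C).

Definition sb_dot (x y : B * C) : B * C :=
  (x.1 * phi x.2 y.1, x.2 * y.2).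

Definition sb_circ (x y : B * C) : B * C :=
  (x.1 * y.1, x.2 * psi x.1 y.2).

Definition sb_one : B * C := (1, 1).

Definition sb_inv (x : B * C) : B * C :=
  (phi (x.2)^-1 (x.1)^-1, (x.2)^-1).

Definition sb_star (a b : B * C) : B * C :=
  sb_dot (sb_dot (sb_inv a) (sb_circ a b)) (sb_inv b).

Inductive in_A' : B * C -> Prop :=
  | A'_star a b : in_A' (sb_star a b)
  | A'_one : in_A' sb_one
  | A'_dot x y : in_A' x -> in_A' y -> in_A' (sb_dot x y)
  | A'_inv x : in_A' x -> in_A' (sb_inv x).

(* A is meta-trivial: A' is a trivial skew brace *)
Definition meta_trivial : Prop :=
  forall x y, in_A' x -> in_A' y -> sb_circ x y = sb_dot x y.

End SkewBrace.

(* Main.v *)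
Require Import Defs.
From HB Require Import structures.
From mathcomp Require Import ssreflect ssrfun ssrbool eqtype choice monoid.
Local Open Scope group_scope.

Section Aux.
Variables (H G : groupType) (act : H -> G -> G).
Hypothesis hact : is_aut_action act.

Lemma act1 x : act 1 x = x.
Proof.
case: hact => ha hm; case: (ha 1) => [[g fK gK] _].
by rewrite -[x](gK x) -hm mulg1.
Qed.

Lemma act_one h : act h 1 = 1.
Proof.
case: hact => ha _; case: (ha h) => _ hm.
by apply: (@mulIg _ (act h 1)); rewrite -hm !mulg1 mul1g.
Qed.

Lemma act_inv h x : act h x^-1 = (act h x)^-1.
Proof.
case: hact => ha _; case: (ha h) => _ hm.
by apply: (@mulIg _ (act h x)); rewrite -hm !mulVg act_one.
Qed.

Lemma act_invK h x : act h (act h^-1 x) = x.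
Proof. by case: hact => _ hm; rewrite -hm mulgV act1. Qed.

Lemma act_fix_inv h x : act h x = x -> act h^-1 x = x.
Proof.
move=> e; case: hact => ha _; case: (ha h) => [[g fK gK] _].
by apply: (can_inj fK); rewrite act_invK e.
Qed.
End Aux.
Arguments act1 {H G act} hact x.
Arguments act_one {H G act} hact h.
Arguments act_inv {H G act} hact h x.
Arguments act_invK {H G act} hact h x.
Arguments act_fix_inv {H G act} hact h x.


Theorem proposition8p4 (B C : groupType) (phi : C -> B -> B) (psi : B -> C -> C)
  (hC : is_abelian C)
  (hphi : is_aut_action phi)
  (hpsi : is_aut_action psi)
  (hcompat : forall (b : B) (c : C) (x : B), phi (psi b c) x = phi c x) :
  meta_trivial phi psi <->
  (forall (b1 b2 : B) (c1 c2 : C),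
     psi (phi c1 b1 * b1^-1) (psi b2 c2 * c2^-1) = psi b2 c2 * c2^-1).
Proof.
have phM c : {morph phi c : x y / x * y} by case: hphi => ha _; case: (ha c).
have psM b : {morph psi b : x y / x * y} by case: hpsi => ha _; case: (ha b).
have star b1 c1 b2 c2 : sb_star phi psi (b1, c1) (b2, c2) =
    (phi c1^-1 b2 * b2^-1, psi b1 c2 * c2^-1).
  rewrite /sb_star /sb_dot /sb_inv /sb_circ /=.
  rewrite -phM mulKg mulKg hcompat.
  by have [_ hm] := hphi; rewrite -hm mulgV (act1 hphi).
split.
- move=> mt b1 b2 c1 c2.
  have := mt _ _ (A'_star phi psi (b2, c1^-1) (b1, c2))
                 (A'_star phi psi (b2, c1) (b2, c2)).
  rewrite !star /sb_circ /sb_dot /= invgK => [[_]] /mulgI //.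
- move=> hyp.
  pose P (x : B * C) :=
    [/\ forall z, phi x.2 z = z,
        forall b1 c1, psi (phi c1 b1 * b1^-1) x.2 = x.2
      & forall c, (forall b1 c1, psi (phi c1 b1 * b1^-1) c = c) -> psi x.1 c = c].
  have HP x : in_A' phi psi x -> P x.
    elim=> {x}.
    + move=> [b1 c1] [b2 c2]; rewrite star; split => /=.
      * by move=> z; have [_ hm] := hphi; rewrite hm hcompat -hm mulgV (act1 hphi).
      * by move=> *; apply: hyp.
      * by move=> c hc; apply: hc.
    + split => /=; first by move=> z; apply: (act1 hphi).
      * by move=> *; apply: (act_one hpsi).
      * by move=> c _; apply: (act1 hpsi).
    + move=> x y _ [x1 x2 x3] _ [y1 y2 y3]; split => /=.
      * by move=> z; have [_ hm] := hphi; rewrite hm y1 x1.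
      * by move=> b1 c1; rewrite psM x2 y2.
      * move=> c hc; have [_ hm] := hpsi; rewrite x1 hm y3 // x3 //.
    + move=> x _ [x1 x2 x3]; split => /=.
      * by move=> z; apply: (act_fix_inv hphi).
      * by move=> b1 c1; rewrite (act_inv hpsi) x2.
      * move=> c hc; rewrite (act_fix_inv hphi) //.
        by apply: (act_fix_inv hpsi); apply: x3.
  move=> x y /HP [x1 _ x3] /HP [_ y2 _].
  by rewrite /sb_circ /sb_dot x1 x3.
Qed.
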